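(* For every fixed $y\in\mathbb R^{|\mathcal S^{\mathrm h}|\cdot|\Omega|}$ (held constant), the ODE $\frac{dx}{dt}=h(x(t),y)$ on $\mathbb R^{|\mathcal S^{\mathrm l}|\cdot|\mathcal A|}$ has a globally asymptotically stable equilibrium $\lambda(y)$. Moreover, the map $y\mapsto\lambda(y)$ is Lipschitz.
   Context: $\mathcal S,\mathcal A$ are finite sets, $P(s'|s,a)$ a transition kernel on $\mathcal S$, $T\ge1$ an integer, $\Omega=\mathcal S$, $\mathcal S^{\mathrm{de}}=\{0,\dots,T-1\}$ with deterministic kernel $P^{\mathrm{de}}(d'|d)=1$ iff $d'=d+1$ for $d\ne T-1$ and $d'=0$ for $d=T-1$. $\mathcal S^{\mathrm h}=\mathcal S$, $\mathcal S^{\mathrm l}=\mathcal S\times\Omega\times\mathcal S^{\mathrm{de}}$. $r^{\mathrm l}:\mathcal S^{\mathrm l}\times\mathcal A\to\mathbb R$ is bounded, $\gamma^{\mathrm l}\in(0,1)$. Given a high-level policy $\pi^{\mathrm h}(\omega|s)$, the low-level kernel is $P^{\mathrm l}_{\pi^{\mathrm h}}((s',\omega',d')|(s,\omega,d),a)=P^{\mathrm{de}}(d'|d)P(s'|s,a)q$ with $q=0$ if $d\ne T-1,\omega'\ne\omega$; $q=1$ if $d\ne T-1,\omega'=\omega$; $q=\pi^{\mathrm h}(\omega'|s)$ if $d=T-1$. The high-level policy is obtained from a high-level Q-table $Q^{\mathrm h}\in\mathbb R^{|\mathcal S^{\mathrm h}|\times|\Omega|}$ by a policy extraction map $\pi^{\mathrm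 h}=\mathcal F^{\mathrm h}(Q^{\mathrm h})$ that is Lipschitz in the infinity norm. Write $x=\mathrm{vec}(Q^{\mathrm l})$ for $Q^{\mathrm l}\in\mathbb R^{|\mathcal S^{\mathrm l}|\times|\mathcal A|}$ and $y=\mathrm{vec}(Q^{\mathrm h})$. The vector field $h$ has components $h_{s^{\mathrm l},a}(x,y)=r^{\mathrm l}(s^{\mathrm l},a)+\gamma^{\mathrm l}\sum_{s^{\mathrm l,+}}P^{\mathrm l}_{\pi^{\mathrm h}}(s^{\mathrm l,+}|s^{\mathrm l},a)\max_{a^+}Q^{\mathrm l}(s^{\mathrm l,+},a^+)-Q^{\mathrm l}(s^{\mathrm l},a)$, with $\pi^{\mathrm h}=\mathcal F^{\mathrm h}(Q^{\mathrm h})$. *)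

(* Defs.v *)
From HB Require Import structures.
From mathcomp Require Import all_boot all_order all_algebra.
From mathcomp Require Import all_classical all_reals all_analysis.
Set Implicit Arguments. Unset Strict Implicit. Unset Printing Implicit Defensive.
Import Order.TTheory GRing.Theory Num.Theory.
Import numFieldNormedType.Exports.
Local Open Scope ring_scope.
Local Open Scope classical_set_scope.

Section HRL.
Variable R : realType.

Definition supn (X : finType) (f : X -> R) : R := \big[Num.max/0]_(i : X) `|f i|.

(* state spaces: S^h = S, Omega = S, S^de = 'I_T, S^l = S * Omega * S^de *)
Definition Sl (S : finType) (T : nat) : finType := (S * S * 'I_T)%type.

Definition Pde (T : nat) (d d' : 'I_T) : R := ((d' : nat) == (d.+1 %% T)%N)%:R.

(* low-level kernel induced by a high-level policy pi, pi (s, w) = pi(w|s) *)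
Definition Pl (S A : finType) (T : nat) (P : S -> A -> S -> R) (pi : S * S -> R)
  (sl : Sl S T) (a : A) (sl' : Sl S T) : R :=
  let: (s, w, d) := sl in
  let: (s', w', d') := sl' in
  Pde d d' * P s a s' *
  (if (d.+1 == T)%N then pi (s, w') else (w' == w)%:R).

(* max_{a} Q(s, a) over the finite action set (0 if A is empty; then irrelevant) *)
Definition maxA (X A : finType) (x : X * A -> R) (s : X) : R :=
  match [pick a : A] with
  | Some a0 => \big[Num.max/x (s, a0)]_(a : A) x (s, a)
  | None => 0
  end.

(* the vector field h(x, y) with x = vec(Q^l), y = vec(Q^h), pi^h = F y *)
Definition hfield (S A : finType) (T : nat) (P : S -> A -> S -> R)
  (r : Sl S T -> A -> R) (gamma : R) (F : (S * S -> R) -> (S * S -> R))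
  (y : S * S -> R) (x : Sl S T * A -> R) : Sl S T * A -> R :=
  fun p => let: (sl, a) := p in
    r sl a + gamma * (\sum_(sl' : Sl S T) Pl P (F y) sl a sl' * maxA x sl')
    - x (sl, a).

Definition is_solution (X : finType) (g : (X -> R) -> X -> R) (x : R -> X -> R) : Prop :=
  (forall i, continuous (fun t => x t i)) /\
  (forall t : R, 0 < t -> forall i, is_derive t 1 (fun s => x s i) (g (x t) i)).

Definition GAS_equilibrium (X : finType) (g : (X -> R) -> X -> R) (xs : X -> R) : Prop :=
  (forall i, g xs i = 0) /\
  (forall eps : R, 0 < eps -> exists2 delta : R, 0 < delta &
     forall x, is_solution g x -> supn (fun i => x 0 i - xs i) < delta ->
       forall t, 0 <= t -> supn (fun i => x t i - xs i) < eps) /\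
  (forall x, is_solution g x -> forall i, (x t i) @[t --> +oo] --> xs i).

End HRL.

(* Main.v *)
Require Import Defs.
From HB Require Import structures.
From mathcomp Require Import all_boot all_order all_algebra.
From mathcomp Require Import all_classical all_reals all_analysis.
From mathcomp Require Import lra ring.
Import Order.TTheory GRing.Theory Num.Theory.
Import numFieldNormedType.Exports.
Local Open Scope ring_scope.

Section Supn.
Context {R : realType} {X : finType}.
Implicit Types f g : X -> R.

Lemma supn_ge0 f : 0 <= supn f.
Proof. exact: bigmax_ge_id. Qed.

Lemma ler_supn f i : `|f i| <= supn f.
Proof. exact: (le_bigmax _ (fun i => `|f i|)). Qed.

Lemma supn_le f M : 0 <= M -> (forall i, `|f i| <= M) -> supn f <= M.
Proof. by move=> M0 H; apply: bigmax_le. Qed.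

Lemma supn_lt f M : 0 < M -> (forall i, `|f i| < M) -> supn f < M.
Proof. by move=> M0 H; apply: bigmax_lt. Qed.

Lemma supn_attained f (i0 : X) : exists i, supn f = `|f i|.
Proof.
have [i _ E] := @eq_bigmax _ _ X 0 i0 xpredT (fun i => `|f i|) isT (fun i _ => normr_ge0 _).
by exists i; rewrite /supn E.
Qed.

End Supn.


Definition rv (R : realType) n := 'rV[R]_n.
HB.instance Definition _ (R : realType) n := NormedModule.copy (rv R n) ('rV[R]_n : normedModType R).
HB.instance Definition _ (R : realType) n := Complete.copy (rv R n) ('rV[R]_n : completeType).

Section Fix.
Context {R : realType} {X : finType}.

Let n := #|X|.
Let enc (x : X -> R) : rv R n := \row_j x (enum_val j).
Let dec (v : rv R n) : X -> R := fun p => v ord0 (enum_rank p).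

Let dec_enc x p : dec (enc x) p = x p.
Proof. by rewrite /dec /enc mxE enum_rankK. Qed.

Let enc_le x y : `|enc x - enc y| <= supn (fun i => x i - y i).
Proof.
change (mx_norm (enc x - enc y) <= supn (fun i => x i - y i)); rewrite mx_normrE.
apply: bigmax_le; first exact: supn_ge0.
move=> [i j] _ /=; rewrite !mxE.
exact: (ler_supn (fun i => x i - y i)).
Qed.

Let dec_le v w : supn (fun i => dec v i - dec w i) <= `|v - w|.
Proof.
apply: supn_le; first exact: normr_ge0.
move=> p; change (`|dec v p - dec w p| <= mx_norm (v - w)); rewrite mx_normrE.
have := le_bigmax 0 (fun ij : 'I_1 * 'I_n => `|(v - w) ij.1 ij.2|) (ord0, enum_rank p).
by rewrite /= !mxE.
Qed.

Lemma fin_fixed (B : (X -> R) -> X -> R) (q : R) : 0 <= q -> q < 1 ->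
  (forall x y, supn (fun i => B x i - B y i) <= q * supn (fun i => x i - y i)) ->
  exists x, forall i, B x i = x i.
Proof.
move=> q0 q1 HB.
pose f := fun v => enc (B (dec v)).
pose g := totalfun_ setT f.
have ctr : is_contraction g.
  exists (NngNum q0); split => //.
  move=> [v w] _ /=.
  apply: le_trans (enc_le _ _) _.
  apply: le_trans (HB _ _) _.
  by apply: ler_wpM2l => //; apply: dec_le.
have [v _ vE] := @banach_fixed_point R (rv R n) setT _ ctr closedT (ex_intro _ 0 I).
exists (dec v) => i.
by rewrite [in RHS]vE /g /= /totalfun_ /f dec_enc.
Qed.

End Fix.

Section P3.
Local Open Scope classical_set_scope.

Lemma sign_lemma {R : realType} (f : R -> R) (t0 D : R) :
  is_derive t0 1 f D -> D < 0 -> 0 <= f t0 ->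
  forall d, 0 < d -> exists t, t0 - d < t < t0 /\ 0 < f t.
Proof.
move=> [df dval] D0 f0 d d0.
have cv := df.
rewrite /derivable in cv.
have cvD : (fun h : R => h^-1 *: ((f \o shift t0) (h *: 1) - f t0)) @ 0^' --> D.
  by rewrite -dval.
have := cvgr_lt D cvD 0 D0.
rewrite near_withinE => Hn.
have [e /= e0 He] := (nbhs_ballP _ _).1 (Hn _).
pose h := - (Num.min e d) / 2.
have mpos : 0 < Num.min e d by rewrite lt_min e0 d0.
have hneg : h < 0 by rewrite /h; lra.
have hle : Num.min e d <= e by rewrite ge_min lexx.
have hld : Num.min e d <= d by rewrite ge_min lexx orbT.
have hb : ball 0 e h.
  rewrite /ball /= sub0r normrN ltr0_norm // /h; lra.
have := He h hb (negbT (lt_eqF hneg)).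
rewrite /= => Hf.
have : 0 < f (h + t0) - f t0.
  by rewrite -(nmulr_rlt0 _ (x := h^-1)) ?invr_lt0 //; move: Hf; rewrite /GRing.scale /= mulr1.
move=> Hf'.
exists (h + t0); split; last by lra.
apply/andP; split; rewrite /h; lra.
Qed.

Section ODE.
Context {R : realType} {X : finType}.
Variables (B : (X -> R) -> X -> R) (gam : R) (xs : X -> R) (g : (X -> R) -> X -> R).
Hypotheses (gam0 : 0 <= gam) (gam1 : gam < 1)
  (HB : forall x y i, `|B x i - B y i| <= gam * supn (fun j => x j - y j))
  (Hxs : forall i, B xs i = xs i)
  (Hg : forall x i, g x i = B x i - x i).

Let k := (1 - gam) / 2.

Lemma u_deriv (c t : R) :
  is_derive t 1 (fun s : R => c * expR (- k * s)) (c * (expR (- k * t) * (- k))).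
Proof.
have e1 : (fun s : R => c * expR (- k * s)) = c \*: (expR \o ( - k \*: id)).
  by apply/funext => s.
rewrite e1.
have h0 : is_derive t 1 (- k \*: (@id R)) (- k *: 1).
  exact: is_deriveZ.
have h1 := is_derive1_comp (is_derive_expR _) h0.
have := @is_deriveZ R R R _ c t 1 _ h1.
by rewrite /GRing.scale /= mulr1.
Qed.

Lemma u_cont (c : R) : continuous (fun s : R => c * expR (- k * s)).
Proof.
move=> t.
have [d _] := u_deriv c t.
by apply: differentiable_continuous; apply/derivable1_diffP.
Qed.

Lemma decay (x : R -> X -> R) (c : R) : is_solution g x -> 0 < c ->
  supn (fun i => x 0 i - xs i) < c ->
  forall t, 0 <= t -> supn (fun i => x t i - xs i) < c * expR (- k * t).
Proof.
move=> [xc xd] c0 H0 t tge0.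
pose u := fun s : R => c * expR (- k * s).
have u_gt0 : forall s, 0 < u s by move=> s; rewrite /u mulr_gt0 // expR_gt0.
pose e := fun s i => x s i - xs i.
pose good := fun s => forall i, `|e s i| < u s.
suff : good t by move=> gt; apply: supn_lt => //; exact: u_gt0.
have [//|bad] := pselect (good t).
exfalso.
pose Bs := [set s | 0 <= s /\ ~ good s].
have Bne : Bs !=set0 by exists t.
have Blb : has_lbound Bs by exists 0 => s [].
pose t0 := inf Bs.
have t0ge : 0 <= t0 by apply: lb_le_inf => // s [].
have before : forall s, 0 <= s -> s < t0 -> good s.
  move=> s s0 st; have [//|nb] := pselect (good s).
  have := ge_inf Blb (conj s0 nb); rewrite -/t0 => /(lt_le_trans st); rewrite ltxx.
  by [].
have good0 : good 0.
  move=> i; apply: le_lt_trans (ler_supn _ i) _.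
  by rewrite /u mulr0 expR0 mulr1.
have notgood : ~ good t0.
  move=> gt0.
  have : \forall s \near t0, forall i, `|e s i| < u s.
    apply: (@filter_forall R X (fun i s => `|e s i| < u s) (nbhs t0) _) => i.
    pose m := u t0 - `|e t0 i|.
    have m0 : 0 < m by rewrite /m subr_gt0.
    have m2 : 0 < m / 2 by rewrite divr_gt0.
    have hx := cvgr_dist_lt _ _ (xc i t0) _ m2.
    have hu := cvgr_dist_lt _ _ (u_cont c t0) _ m2.
    near=> s.
    have h1 : `|x t0 i - x s i| < m / 2 by near: s; exact: hx.
    have h2 : `|u t0 - u s| < m / 2 by near: s; exact: hu.
    have h3 : `|e s i| <= `|e t0 i| + `|x t0 i - x s i|.
      have -> : e s i = e t0 i - (x t0 i - x s i) by rewrite /e; lra.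
      exact: ler_normB.
    have h4 : u t0 - u s <= `|u t0 - u s| := ler_norm _.
    rewrite /m in h1 h2; lra.
  move=> Hn; have [dl /= dl0 Hdl] := (nbhs_ballP _ _).1 Hn.
  have : t0 + dl <= t0.
    apply: lb_le_inf => // b [b0 nb].
    have tb : t0 <= b := ge_inf Blb (conj b0 nb).
    rewrite leNgt; apply/negP => bl.
    apply: nb; apply: Hdl.
    rewrite /ball /= ler0_norm ?subr_le0 //; lra.
  lra.
have t0pos : 0 < t0.
  rewrite lt_neqAle t0ge andbT; apply/negP => /eqP t00.
  by apply: notgood; rewrite -t00.
have [j hj] : exists j, u t0 <= `|e t0 j|.
  apply: contrapT => nex; apply: notgood => j.
  rewrite ltNge; apply/negP => hj; apply: nex; by exists j.
have [i hi] := supn_attained (e t0) j.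
set V := supn (e t0) in hi.
have Vu : u t0 <= V := le_trans hj (ler_supn _ j).
pose sg : R := if 0 <= e t0 i then 1 else -1.
have sgn : `|sg| = 1 by rewrite /sg; case: ifP => _; rewrite ?normrN normr1.
have sge : sg * e t0 i = V.
  rewrite hi /sg; case: ifP => h.
    by rewrite mul1r ger0_norm.
  by rewrite mulN1r ltr0_norm // ltNge h.
pose f := fun s => sg * (x s i - xs i) - u s.
have fd : is_derive t0 1 f (sg * (g (x t0) i - 0) - c * (expR (- k * t0) * (- k))).
  have e1 : f = sg \*: ((fun s => x s i) - cst (xs i)) - (fun s : R => c * expR (- k * s)).
    by apply/funext => s.
  rewrite e1.
  apply: is_deriveB; last exact: u_deriv.
  apply: is_deriveZ; apply: is_deriveB; first exact: xd.
have Dneg : sg * (g (x t0) i - 0) - c * (expR (- k * t0) * (- k)) < 0.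
  rewrite subr0 Hg.
  have -> : B (x t0) i - x t0 i = (B (x t0) i - B xs i) - e t0 i by rewrite /e Hxs; lra.
  rewrite mulrBr sge.
  have hb : sg * (B (x t0) i - B xs i) <= gam * V.
    apply: le_trans (ler_norm _) _; rewrite normrM sgn mul1r; exact: HB.
  have -> : c * (expR (- k * t0) * - k) = - (k * u t0) by rewrite /u; lra.
  have p1 : 0 <= (1 - gam) * (V - u t0) by rewrite mulr_ge0 // subr_ge0 // ltW.
  have p2 : 0 < (1 - gam) * u t0 by rewrite mulr_gt0 // ?subr_gt0.
  rewrite /k; lra.
have f0 : 0 <= f t0 by rewrite /f -/(e t0 i) sge subr_ge0.
have [s [/andP [s1 s2] fs]] := @sign_lemma R f t0 _ fd Dneg f0 t0 t0pos.
have s0 : 0 < s by lra.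
have gs := before s (ltW s0) s2.
have := gs i; rewrite /e => hs.
have : sg * (x s i - xs i) <= `|x s i - xs i|.
  by apply: le_trans (ler_norm _) _; rewrite normrM sgn mul1r.
rewrite /f in fs; lra.
Unshelve. all: by end_near.
Qed.

Lemma gas : GAS_equilibrium g xs.
Proof.
have k0 : 0 < k by rewrite /k divr_gt0 // subr_gt0.
split; first by move=> i; rewrite Hg Hxs subrr.
split.
  move=> eps eps0; exists eps => // x xsol H0 t t0.
  apply: lt_le_trans (decay x eps xsol eps0 H0 t t0) _.
  rewrite -[leRHS]mulr1 ler_pM2l // expR_le1 mulNr oppr_le0 mulr_ge0 // ltW //.
move=> x xsol i.
apply/cvgrPdist_lt => eps eps0.
pose c := supn (fun i => x 0 i - xs i) + 1.
have c0 : 0 < c by rewrite /c ltr_wpDl // supn_ge0.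
have H0 : supn (fun i => x 0 i - xs i) < c by rewrite /c ltrDl.
pose T0 := - ln (eps / c) / k.
have : \forall t \near +oo, Num.max 0 T0 < t by apply: nbhs_pinfty_gt; exact: num_real.
apply: filterS => t; rewrite gt_max => /andP [tpos tT].
have := decay x c xsol c0 H0 t (ltW tpos).
move=> /(le_lt_trans (ler_supn _ i)).
rewrite distrC => h.
apply: lt_le_trans h _.
have ec : 0 < eps / c by rewrite divr_gt0.
have : expR (- k * t) <= eps / c.
  rewrite -[leRHS](lnK (x := eps / c)) ?posrE // ler_expR.
  move: tT; rewrite /T0 ltr_pdivrMr // => h.
  rewrite mulNr; lra.
move=> h; have := ler_wpM2l (ltW c0) h.
by rewrite mulrCA mulfV ?gt_eqF // mulr1.
Qed.

End ODE.

End P3.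

Section Model.
Context {R : realType}.

Lemma maxA_lip (Y A : finType) (x x' : Y * A -> R) s :
  `|Defs.maxA x s - Defs.maxA x' s| <= supn (fun p => x p - x' p).
Proof.
rewrite /Defs.maxA; case: pickP => [a0 _|_]; last by rewrite subrr normr0 supn_ge0.
set M := supn (fun p => x p - x' p).
have H : forall a, `|x (s, a) - x' (s, a)| <= M := fun a => ler_supn (fun p => x p - x' p) (s, a).
have side : forall (f g : Y * A -> R), (forall a, f (s, a) <= g (s, a) + M) ->
    \big[Num.max/f (s, a0)]_a f (s, a) <= \big[Num.max/g (s, a0)]_a g (s, a) + M.
  move=> f g fg; apply: bigmax_le.
    by apply: le_trans (fg a0) _; rewrite lerD2r; exact: bigmax_ge_id.
  move=> a _; apply: le_trans (fg a) _; rewrite lerD2r.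
  exact: (le_bigmax _ (fun a => g (s, a))).
rewrite ler_norml; apply/andP; split.
  suff : \big[Num.max/x' (s, a0)]_a x' (s, a) <= \big[Num.max/x (s, a0)]_a x (s, a) + M by lra.
  apply: side => a; by move: (H a); rewrite ler_norml => /andP [h _]; lra.
suff : \big[Num.max/x (s, a0)]_a x (s, a) <= \big[Num.max/x' (s, a0)]_a x' (s, a) + M by lra.
apply: side => a; by move: (H a); rewrite ler_norml => /andP [_ h]; lra.
Qed.

Lemma maxA0 (Y A : finType) s : Defs.maxA (fun _ : Y * A => 0 : R) s = 0.
Proof.
rewrite /Defs.maxA; case: pickP => [a0 _|//].
by rewrite bigmax_eq_id.
Qed.

Variables (S A : finType) (T : nat) (hT : (0 < T)%N) (P : S -> A -> S -> R)
  (hP0 : forall s a s', 0 <= P s a s')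
  (hP1 : forall s a, \sum_(s' : S) P s a s' = 1).

Lemma sumPde (d : 'I_T) : \sum_(d' : 'I_T) Pde R d d' = 1.
Proof.
pose k0 : 'I_T := Ordinal (ltn_pmod d.+1 hT).
rewrite (bigD1 k0) //= big1 ?addr0.
  by rewrite /Pde eqxx.
move=> d'' ne; rewrite /Pde.
by have -> : ((d'' : nat) == (d.+1 %% T)%N) = false by apply/negbTE.
Qed.

Lemma Pde_ge0 (d d' : 'I_T) : 0 <= Pde R d d'.
Proof. by rewrite /Pde ler0n. Qed.

Lemma sum_Pl_phi (s : S) (a : A) (d : 'I_T) (phi : S -> R) :
  \sum_(sl' : Sl S T) Pde R d sl'.2 * P s a sl'.1.1 * phi sl'.1.2 = \sum_(w : S) phi w.
Proof.
rewrite -(pair_bigA _ (fun sw (d' : 'I_T) => Pde R d d' * P s a sw.1 * phi sw.2)) /=.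
rewrite (eq_bigr (fun sw : S * S => P s a sw.1 * phi sw.2)); last first.
  move=> sw _; rewrite -big_distrl /= -big_distrl /= sumPde mul1r.
  by [].
rewrite (_ : \sum_(i : S * S) P s a i.1 * phi i.2 = \sum_(s' : S) \sum_(w : S) P s a s' * phi w); last by rewrite pair_bigA.
rewrite (eq_bigr (fun s' => P s a s' * \sum_(w : S) phi w)); last by move=> s' _; rewrite big_distrr.
by rewrite -big_distrl /= hP1 mul1r.
Qed.

Definition qq (pi : S * S -> R) (s w : S) (d : 'I_T) (w' : S) : R :=
  if (d.+1 == T)%N then pi (s, w') else (w' == w)%:R.

Lemma Pl_form pi s w (d : 'I_T) (a : A) (sl' : Sl S T) :
  Pl P pi (s, w, d) a sl' = Pde R d sl'.2 * P s a sl'.1.1 * qq pi s w d sl'.1.2.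
Proof. by case: sl' => [[s' w'] d']. Qed.

Lemma Pl_ge0 pi (hpi : forall s w, 0 <= pi (s, w)) (sl : Sl S T) (a : A) (sl' : Sl S T) : 0 <= Pl P pi sl a sl'.
Proof.
case: sl => [[s w] d]; rewrite Pl_form /qq.
rewrite mulr_ge0 // ?mulr_ge0 // ?Pde_ge0 //.
by case: ifP => _ //; rewrite ler0n.
Qed.

Lemma Pl_sum pi (hpi1 : forall s, \sum_w pi (s, w) = 1) (sl : Sl S T) (a : A) :
  \sum_(sl' : Sl S T) Pl P pi sl a sl' = 1.
Proof.
case: sl => [[s w] d].
under eq_bigr do rewrite Pl_form.
rewrite (sum_Pl_phi s a d (qq pi s w d)) /qq; case: (d.+1 == T)%N; first exact: hpi1.
rewrite (bigD1 w) //= eqxx big1 ?addr0 //.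
by move=> w'' ne; rewrite (negbTE ne).
Qed.

Lemma Pl_contr pi (hpi : forall s w, 0 <= pi (s, w)) (hpi1 : forall s, \sum_w pi (s, w) = 1)
  (sl : Sl S T) (a : A) (m : Sl S T -> R) M : (forall sl', `|m sl'| <= M) ->
  `|\sum_(sl' : Sl S T) Pl P pi sl a sl' * m sl'| <= M.
Proof.
move=> hm.
apply: le_trans (ler_norm_sum _ _ _) _.
apply: (@le_trans _ _ (\sum_(sl' : Sl S T) Pl P pi sl a sl' * M)) _.
  apply: ler_sum => sl' _; rewrite normrM ger0_norm ?Pl_ge0 //.
  by apply: ler_wpM2l => //; apply: Pl_ge0.
by rewrite -big_distrl /= Pl_sum // mul1r.
Qed.

Lemma Pl_diff pi1 pi2 s w (d : 'I_T) (a : A) (m : Sl S T -> R) K : (forall sl', `|m sl'| <= K) ->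
  `|\sum_(sl' : Sl S T) (Pl P pi1 (s, w, d) a sl' - Pl P pi2 (s, w, d) a sl') * m sl'|
   <= K * \sum_(w' : S) `|pi1 (s, w') - pi2 (s, w')|.
Proof.
move=> hm.
have K0 : 0 <= K by apply: le_trans (hm (s, w, d)).
apply: le_trans (ler_norm_sum _ _ _) _.
apply: (@le_trans _ _ (\sum_(sl' : Sl S T) Pde R d sl'.2 * P s a sl'.1.1 *
   (K * `|pi1 (s, sl'.1.2) - pi2 (s, sl'.1.2)|))) _.
  apply: ler_sum => sl' _; rewrite !Pl_form -mulrBr normrM normrM.
  rewrite ger0_norm ?mulr_ge0 ?Pde_ge0 //.
  rewrite -mulrA; apply: ler_wpM2l; first by rewrite mulr_ge0 ?Pde_ge0.
  rewrite mulrC; apply: ler_pM => //.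
  rewrite /qq; case: (d.+1 == T)%N => //; by rewrite subrr normr0.
by rewrite (sum_Pl_phi s a d (fun w' => K * `|pi1 (s, w') - pi2 (s, w')|)) big_distrr.
Qed.

End Model.


Theorem lemma1 (R : realType) (S A : finType) (T : nat) (hT : (0 < T)%N)
  (P : S -> A -> S -> R)
  (hP0 : forall s a s', 0 <= P s a s')
  (hP1 : forall s a, \sum_(s' : S) P s a s' = 1)
  (r : Sl S T -> A -> R) (gamma : R) (hgamma : 0 < gamma < 1)
  (F : (S * S -> R) -> (S * S -> R))
  (hF0 : forall Q s w, 0 <= F Q (s, w))
  (hF1 : forall Q s, \sum_(w : S) F Q (s, w) = 1)
  (hFL : exists L : R, 0 <= L /\ forall Q1 Q2,
      supn (fun p => F Q1 p - F Q2 p) <= L * supn (fun p => Q1 p - Q2 p)) :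
  exists lam : (S * S -> R) -> (Sl S T * A -> R),
    (forall y : S * S -> R, GAS_equilibrium (hfield P r gamma F y) (lam y)) /\
    (exists L : R, 0 <= L /\ forall y1 y2,
       supn (fun p => lam y1 p - lam y2 p) <= L * supn (fun p => y1 p - y2 p)).
Proof.
have [L [L0 HL]] := hFL.
case/andP: hgamma => gpos g1.
have g0 : 0 <= gamma := ltW gpos.
pose Bop (y : S * S -> R) (x : Sl S T * A -> R) (p : Sl S T * A) : R :=
  let: (sl, a) := p in
  r sl a + gamma * \sum_(sl' : Sl S T) Pl P (F y) sl a sl' * Defs.maxA x sl'.
have Hg : forall y x p, hfield P r gamma F y x p = Bop y x p - x p by move=> y x [sl a].
have Hc : forall y x x' p, `|Bop y x p - Bop y x' p| <= gamma * supn (fun j => x j - x' j).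
  move=> y x x' [sl a] /=.
  set s1 := \sum_(sl' : Sl S T) _.
  set s2 := \sum_(sl' : Sl S T) _.
  have -> : r sl a + gamma * s1 - (r sl a + gamma * s2) = gamma * (s1 - s2) by ring.
  rewrite normrM ger0_norm // ler_wpM2l //.
  rewrite /s1 /s2 -sumrB.
  under eq_bigr do rewrite -mulrBr.
  apply: (Pl_contr S A T hT P hP0 hP1 (F y) (hF0 y) (hF1 y) sl a (fun sl' => Defs.maxA x sl' - Defs.maxA x' sl')) => sl'.
  exact: maxA_lip.
have /choice [lam Hlam] : forall y, exists x, forall p, Bop y x p = x p.
  move=> y; apply: (fin_fixed (Bop y) gamma g0 g1) => x x'.
  apply: supn_le; first by rewrite mulr_ge0 // supn_ge0.
  exact: Hc.
exists lam; split.
  move=> y; apply: (gas (Bop y) gamma (lam y)) => //; exact: Hc.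
have g1' : 0 < 1 - gamma by rewrite subr_gt0.
pose Mr := supn (fun p : Sl S T * A => r p.1 p.2).
pose K := Mr / (1 - gamma).
have K0 : 0 <= K by rewrite /K divr_ge0 ?supn_ge0 // ltW.
have bnd : forall y, supn (fun p => lam y p - 0) <= K.
  move=> y; set N := supn (fun p => lam y p - 0).
  have hp : forall p, `|lam y p - 0| <= Mr + gamma * N.
    move=> [sl a]; rewrite subr0 -Hlam /=.
    apply: le_trans (ler_normD _ _) _; apply: lerD.
      exact: (ler_supn (fun p : Sl S T * A => r p.1 p.2) (sl, a)).
    rewrite normrM ger0_norm // ler_wpM2l //.
    apply: (Pl_contr S A T hT P hP0 hP1 (F y) (hF0 y) (hF1 y) sl a (Defs.maxA (lam y))) => sl'.
    by have := maxA_lip _ _ (lam y) (fun _ => 0) sl'; rewrite maxA0 subr0.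
  have hN : N <= Mr + gamma * N.
    apply: supn_le => //; rewrite addr_ge0 ?mulr_ge0 ?supn_ge0 //.
  rewrite /K ler_pdivlMr //; lra.
have mb : forall y sl', `|Defs.maxA (lam y) sl'| <= K.
  move=> y sl'; apply: le_trans (bnd y).
  by have := maxA_lip _ _ (lam y) (fun _ => 0) sl'; rewrite maxA0 subr0.
exists (gamma * K * #|S|%:R * L / (1 - gamma)); split.
  have i0 : 0 <= (1 - gamma)^-1 by rewrite invr_ge0 ltW.
  by rewrite mulr_ge0 // mulr_ge0 // mulr_ge0 // mulr_ge0.
move=> y1 y2.
set D := supn (fun p => lam y1 p - lam y2 p).
set Y := supn (fun p => y1 p - y2 p).
have hFY : forall s w, `|F y1 (s, w) - F y2 (s, w)| <= L * Y.
  move=> s w; apply: le_trans (HL y1 y2).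
  exact: (ler_supn (fun p => F y1 p - F y2 p) (s, w)).
have hp : forall p, `|lam y1 p - lam y2 p| <= gamma * D + gamma * (K * ((L * Y) *+ #|S|)).
  move=> [[[s w] d] a]; rewrite -(Hlam y1) -(Hlam y2) /=.
  set m1 := Defs.maxA (lam y1).
  set m2 := Defs.maxA (lam y2).
  set A1 := \sum_(sl' : Sl S T) Pl P (F y1) (s, w, d) a sl' * m1 sl'.
  set A2 := \sum_(sl' : Sl S T) Pl P (F y2) (s, w, d) a sl' * m2 sl'.
  have E2 : A1 - A2 = \sum_(sl' : Sl S T) Pl P (F y1) (s, w, d) a sl' * (m1 sl' - m2 sl')
     + \sum_(sl' : Sl S T) (Pl P (F y1) (s, w, d) a sl' - Pl P (F y2) (s, w, d) a sl') * m2 sl'.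
    rewrite /A1 /A2 -sumrB -big_split; apply: eq_bigr => i _ /=; ring.
  have -> : r (s, w, d) a + gamma * A1 - (r (s, w, d) a + gamma * A2) = gamma * (A1 - A2) by ring.
  rewrite E2 normrM ger0_norm // -mulrDr ler_wpM2l //.
  apply: le_trans (ler_normD _ _) _; apply: lerD.
    apply: (Pl_contr S A T hT P hP0 hP1 (F y1) (hF0 y1) (hF1 y1) (s, w, d) a
      (fun sl' => m1 sl' - m2 sl')) => sl'.
    exact: maxA_lip.
  apply: le_trans (Pl_diff S A T hT P hP0 hP1 (F y1) (F y2) s w d a m2 K (mb y2)) _.
  apply: ler_wpM2l => //.
  rewrite -sumr_const; apply: ler_sum => w' _; exact: hFY.
have hD : D <= gamma * D + gamma * (K * ((L * Y) *+ #|S|)).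
  apply: supn_le => //; apply: addr_ge0; first exact: mulr_ge0 g0 (supn_ge0 _).
  apply: mulr_ge0 => //; apply: mulr_ge0 => //; apply: mulrn_wge0; apply: mulr_ge0 => //; exact: supn_ge0.
have -> : gamma * K * #|S|%:R * L / (1 - gamma) * Y =
    (gamma * (K * ((L * Y) *+ #|S|))) / (1 - gamma).
  rewrite -mulr_natr; field; lra.
rewrite ler_pdivlMr //; lra.
Qed.
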